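(* Let $f\in\mathbb C[x_1,\dots,x_n]$ be nonzero, $\ell\in\mathbb N$ and $\omega\in\mathbb R^n\setminus\{0\}$, and let $\tau=\tau_\omega$. Then $$\mathrm{in}_{(-\omega,\omega)}\Big(\mathrm{Ann}\big(\tfrac1{f^\ell}\big)\Big)\subseteq\mathrm{Ann}\Big(\tfrac1{f_\tau^\ell}\Big).$$
   Context: $D_n$ is the $n$-th Weyl algebra ($\partial_ix_j=x_j\partial_i+\delta_{ij}$); ideals are left ideals. For $\omega\in\mathbb R^n$, the $(-\omega,\omega)$-weight of $x^\alpha\partial^\beta$ is $-\langle\omega,\alpha\rangle+\langle\omega,\beta\rangle$; $\mathrm{in}_{(-\omega,\omega)}(P)$ is the sum of the terms of maximal weight of the normally ordered expression of $P$, and $\mathrm{in}_{(-\omega,\omega)}(I)$ is the left ideal generated by the $\mathrm{in}_{(-\omega,\omega)}(P)$, $P\in I\setminus\{0\}$. For a nonzero rational function $g$, $\mathrm{Ann}(g)=\{P\in D_n:P\bullet g=0\}$ with $x_i\bullet g=x_ig$, $\partial_i\bullet g=\partial g/\partial x_i$. For $f=\sum_\gamma c_\gamma x^\gamma$: $\mathrm{Supp}(f)=\{\gamma:c_\gamma\ne0\}$, $\Gamma(f)$ its convex hull, $\mathrm{ord}_f(\omega)=\min\{\langle\gamma,\omega\rangle:\gamma\in\Gamma(f)\}$, $\tau_\omega=\{u\in\Gamma(f):\langle u,\omega\rangle=\mathrm{ord}_f(\omega)\}$, and for a face $\tau$, $f_\tau=\sum_{\gamma\in\tau\cap\mathrm{Supp}(f)}c_\gamma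 x^\gamma$. $\mathbb N=\{0,1,2,\dots\}$. *)

(* Defs.v *)
From HB Require Import structures.
From mathcomp Require Import all_boot all_order all_algebra.
From mathcomp Require Import fraction.
From mathcomp.multinomials Require Import mpoly.
From mathcomp.real_closed Require Import complex.
From mathcomp Require Import Rstruct.
From Stdlib Require Rdefinitions ClassicalEpsilon.

Set Implicit Arguments.
Unset Strict Implicit.
Unset Printing Implicit Defensive.
Import Order.TTheory GRing.Theory Num.Theory.
Local Open Scope ring_scope.

Notation RR := Rdefinitions.R.
Definition CC : Type := RR[i].
Notation "x %:F" := (@FracField.tofrac _ x).

Section Weyl.
Variable n : nat.

Notation Poly := {mpoly CC[n]}.
Notation RatF := {fraction Poly}.

(* An element of the Weyl algebra D_n is represented by its normally
   ordered expression  sum c_{a,b} x^a d^b  , encoded as the commutative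
   polynomial sum c_{a,b} X^a Y^b in 2n variables: variable (lshift n i)
   stands for x_i and variable (rshift n i) stands for d_i. *)
Definition Weyl := {mpoly CC[n + n]}.

Definition xpart (m : 'X_{1..n + n}) : 'X_{1..n} :=
  [multinom m (lshift n i) | i < n].
Definition dpart (m : 'X_{1..n + n}) : 'X_{1..n} :=
  [multinom m (rshift n i) | i < n].

(* Left multiplication by x_i and by d_i in D_n (normally ordered form):
   x_i . x^a d^b = x^(a+e_i) d^b ;
   d_i . x^a d^b = x^a d^(b+e_i) + a_i x^(a-e_i) d^b. *)
Definition weyl_x (i : 'I_n) (P : Weyl) : Weyl := 'X_(lshift n i) * P.
Definition weyl_d (i : 'I_n) (P : Weyl) : Weyl :=
  'X_(rshift n i) * P + mderiv (lshift n i) P.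

Definition weyl_mon_mul (a b : 'X_{1..n}) (P : Weyl) : Weyl :=
  foldr (fun i Q => iter (a i) (weyl_x i) Q)
    (foldr (fun i Q => iter (b i) (weyl_d i) Q) P (enum 'I_n)) (enum 'I_n).

Definition weyl_mul (A P : Weyl) : Weyl :=
  \sum_(m <- msupp A) A@_m *: weyl_mon_mul (xpart m) (dpart m) P.

Inductive lideal_gen (S : Weyl -> Prop) : Weyl -> Prop :=
| lg_base P : S P -> lideal_gen S P
| lg_zero : lideal_gen S 0
| lg_add P Q : lideal_gen S P -> lideal_gen S Q -> lideal_gen S (P + Q)
| lg_lmul A P : lideal_gen S P -> lideal_gen S (weyl_mul A P).

Definition weight (w : 'rV[RR]_n) (m : 'X_{1..n + n}) : RR :=
  \sum_(i < n) (- ((xpart m) i)%:R * w 0 i + ((dpart m) i)%:R * w 0 i).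

Definition in_form (w : 'rV[RR]_n) (P : Weyl) : Weyl :=
  \sum_(m <- msupp P | all (fun m' => weight w m' <= weight w m) (msupp P))
     P@_m *: 'X_[m].

Definition in_ideal (w : 'rV[RR]_n) (I : Weyl -> Prop) : Weyl -> Prop :=
  lideal_gen (fun Q => exists P, [/\ I P, P != 0 & Q = in_form w P]).

Definition frac_deriv (i : 'I_n) (g : RatF) : RatF :=
  let r := repr g in
  ((mderiv i (\n_r) * \d_r - \n_r * mderiv i (\d_r))%:F) / ((\d_r ^+ 2)%:F).

Definition mon_act (a b : 'X_{1..n}) (g : RatF) : RatF :=
  ('X_[a] : Poly)%:F *
  foldr (fun i h => iter (b i) (frac_deriv i) h) g (enum 'I_n).

Definition act (P : Weyl) (g : RatF) : RatF :=
  \sum_(m <- msupp P) ((P@_m)%:MP : Poly)%:F * mon_act (xpart m) (dpart m) g.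

Definition Ann (g : RatF) : Weyl -> Prop := fun P => act P g = 0.

Definition inv_pow (f : Poly) (l : nat) : RatF := ((f ^+ l)%:F)^-1.

Definition expv (m : 'X_{1..n}) : 'I_n -> RR := fun i => (m i)%:R.

Definition pairing (u : 'I_n -> RR) (w : 'rV[RR]_n) : RR :=
  \sum_(i < n) u i * w 0 i.

Definition newton_polytope (f : Poly) (u : 'I_n -> RR) : Prop :=
  exists lam : 'X_{1..n} -> RR,
    [/\ forall m, 0 <= lam m,
        \sum_(m <- msupp f) lam m = 1 &
        forall i, u i = \sum_(m <- msupp f) lam m * expv m i].

Definition face (f : Poly) (w : 'rV[RR]_n) (u : 'I_n -> RR) : Prop :=
  newton_polytope f u /\
  forall v, newton_polytope f v -> pairing u w <= pairing v w.

Definition face_poly (f : Poly) (w : 'rV[RR]_n) : Poly :=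
  \sum_(m <- msupp f)
     if ClassicalEpsilon.excluded_middle_informative (face f w (expv m))
     then f@_m *: 'X_[m] else 0.

End Weyl.

(* Main.v *)
Require Import Defs.
From HB Require Import structures.
From mathcomp Require Import all_boot all_order all_algebra.
From mathcomp Require Import fraction.
From mathcomp.multinomials Require Import mpoly.
From mathcomp.real_closed Require Import complex.
From mathcomp Require Import Rstruct.
From mathcomp Require Import generic_quotient ring lra.
Set Implicit Arguments. Unset Strict Implicit. Unset Printing Implicit Defensive.
Import Order.TTheory GRing.Theory Num.Theory.
Local Open Scope ring_scope.
Module W1.

Lemma frac_reprE (R : idomainType) (g : {fraction R}) :
  g = (\n_(repr g))%:F / (\d_(repr g))%:F.
Proof.
have dn := denom_ratioP (repr g).
apply: (@mulIf _ (\d_(repr g))%:F); first by rewrite tofrac_eq0.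
rewrite mulfVK ?tofrac_eq0 //.
rewrite -{1}[g]reprK.
set x := repr g.
rewrite /tofrac -?lock.
rewrite -[LHS]FracField.pi_mul. apply/eqmodP => /=.
rewrite FracField.equivfE /FracField.mulf !numden_Ratio;
  [by rewrite !mulr1 mulrC|by rewrite ?mulr1 ?oner_neq0..].
Qed.

Lemma frac_eq (R : idomainType) (a b c d : R) : b != 0 -> d != 0 ->
  a * d = c * b -> a%:F / b%:F = c%:F / d%:F.
Proof.
move=> b0 d0 h; apply/eqP; rewrite eqr_div ?tofrac_eq0 // -!tofracM h //.
Qed.

Lemma ring_id1 (R : comRingType) (N D q p Ni Di qi pi : R) :
  Ni * q + N * qi = pi * D + p * Di -> N * q = p * D ->
  (Ni * D - N * Di) * q ^+ 2 = (pi * q - p * qi) * D ^+ 2.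
Proof.
move=> E' E; apply/eqP; rewrite -subr_eq0.
have -> : (Ni * D - N * Di) * q ^+ 2 - (pi * q - p * qi) * D ^+ 2
   = D * q * ((Ni * q + N * qi) - (pi * D + p * Di))
     + (Di * q + qi * D) * (p * D - N * q) by ring.
by rewrite E' E !subrr !mulr0 addr0.
Qed.

Section A.
Variable (R : idomainType) (n : nat).
Local Notation Poly := {mpoly R[n]}.
Local Notation RatF := {fraction Poly}.
Implicit Types (p q : Poly) (g h : RatF).

Definition fd (i : 'I_n) (g : RatF) : RatF :=
  let r := repr g in
  ((mderiv i (\n_r) * \d_r - \n_r * mderiv i (\d_r))%:F) / ((\d_r ^+ 2)%:F).

Lemma fdE (i : 'I_n) p q : q != 0 ->
  fd i (p%:F / q%:F) = (p^`M(i) * q - p * q^`M(i))%:F / (q ^+ 2)%:F.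
Proof.
move=> q0; rewrite {1}/fd.
set r := repr _; have d0 := denom_ratioP r.
have E : \n_r * q = p * \d_r.
  have := frac_reprE (p%:F / q%:F); rewrite -/r => /eqP.
  by rewrite eqr_div ?tofrac_eq0 // -!tofracM tofrac_eq => /eqP.
have E' := congr1 (mderiv i) E; rewrite !mderivM in E'.
apply: frac_eq.
- exact: expf_neq0.
- exact: expf_neq0.
move: E E'; set N := \n_r; set D := \d_r; move=> E E'.
exact: ring_id1 E' E.
Qed.

Lemma mulF (p a b : Poly) : p%:F * (a%:F / b%:F) = (p * a)%:F / b%:F.
Proof. by rewrite mulrA tofracM. Qed.

Lemma addF (a b c d : Poly) : b != 0 -> d != 0 ->
  a%:F / b%:F + c%:F / d%:F = (a * d + c * b)%:F / (b * d)%:F.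
Proof. by move=> b0 d0; rewrite addf_div ?tofrac_eq0 // -!tofracM -tofracD. Qed.

Lemma mderiv1 (i : 'I_n) : (1 : Poly)^`M(i) = 0.
Proof. by rewrite -mpolyC1 mderivC. Qed.

Lemma fd_poly (i : 'I_n) p : fd i p%:F = (p^`M(i))%:F.
Proof.
have -> : p%:F = p%:F / 1%:F by rewrite tofrac1 divr1.
rewrite fdE ?oner_neq0 // mderiv1 expr1n tofrac1 divr1.
by rewrite mulr0 subr0 mulr1.
Qed.

Lemma fd0 (i : 'I_n) : fd i 0 = 0.
Proof. by rewrite -tofrac0 fd_poly mderiv0. Qed.

Lemma fdD (i : 'I_n) g h : fd i (g + h) = fd i g + fd i h.
Proof.
rewrite [g]frac_reprE [h]frac_reprE.
set a := \n_ _; set b := \d_ _; set c := \n_ _; set d := \d_ _.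
have b0 : b != 0 by exact: denom_ratioP.
have d0 : d != 0 by exact: denom_ratioP.
have bd0 := mulf_neq0 b0 d0.
have b20 := expf_neq0 2 b0; have d20 := expf_neq0 2 d0.
rewrite (addF _ _ b0 d0) (fdE _ _ bd0) (fdE _ _ b0) (fdE _ _ d0) (addF _ _ b20 d20).
apply: frac_eq; [exact: expf_neq0 | exact: mulf_neq0 |].
rewrite !mderivD !mderivM; ring.
Qed.

Lemma fdMp (i : 'I_n) p h : fd i (p%:F * h) = (p^`M(i))%:F * h + p%:F * fd i h.
Proof.
rewrite [h]frac_reprE.
set c := \n_ _; set d := \d_ _.
have d0 : d != 0 by exact: denom_ratioP.
have d20 := expf_neq0 2 d0.
rewrite (fdE _ _ d0) !mulF (fdE _ _ d0) (addF _ _ d0 d20).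
apply: frac_eq; [exact: d20 | exact: mulf_neq0 |].
rewrite !mderivM; ring.
Qed.

Lemma fd_comm (i j : 'I_n) h : fd i (fd j h) = fd j (fd i h).
Proof.
rewrite [h]frac_reprE.
set a := \n_ _; set b := \d_ _.
have b0 : b != 0 by exact: denom_ratioP.
have b20 := expf_neq0 2 b0.
rewrite (fdE _ _ b0) (fdE _ _ b0) (fdE _ _ b20) (fdE _ _ b20).
apply: frac_eq; [exact: expf_neq0 | exact: expf_neq0 |].
rewrite !mderivB !mderivM !expr2 ?mderivM.
rewrite [a^`M(j)^`M(i)]mderiv_comm [b^`M(j)^`M(i)]mderiv_comm; ring.
Qed.

End A.

End W1.
Import W1.
Module W2.

Section B.
Variable n : nat.
Local Notation Poly := {mpoly CC[n]}.
Local Notation RatF := {fraction Poly}.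
Local Notation W := (Weyl n).
Implicit Types (P Q : W) (g : RatF).

Lemma frac_deriv_fd (i : 'I_n) g : frac_deriv i g = fd i g.
Proof. by []. Qed.

Definition MA (m : 'X_{1..n + n}) g := mon_act (xpart m) (dpart m) g.

Lemma act_seq P g (s : seq 'X_{1..n + n}) : uniq s -> {subset msupp P <= s} ->
  act P g = \sum_(m <- s) ((P@_m)%:MP : Poly)%:F * MA m g.
Proof.
move=> us sub; rewrite /act /MA [RHS](bigID (fun m => m \in msupp P)) /=.
rewrite [X in _ = _ + X]big1 ?addr0; last first.
  by move=> m; rewrite -mcoeff_eq0 => /eqP ->; rewrite mpolyC0 tofrac0 mul0r.
rewrite -[RHS]big_filter; apply: perm_big; apply: uniq_perm.
- exact: msupp_uniq.
- exact: filter_uniq.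
move=> m; rewrite mem_filter; apply/idP/andP => [h|[]//].
by split => //; apply: sub.
Qed.

Lemma act0 g : act (0 : W) g = 0.
Proof.
rewrite (@act_seq _ _ [::]) ?big_nil //.
by move=> m; rewrite mcoeff_msupp mcoeff0 eqxx.
Qed.

Lemma actD P Q g : act (P + Q) g = act P g + act Q g.
Proof.
set s := undup (msupp P ++ msupp Q).
have us : uniq s by exact: undup_uniq.
rewrite (@act_seq (P + Q) g s us); last first.
  by move=> m /msuppD_le; rewrite mem_undup.
rewrite (@act_seq P g s us); last by move=> m h; rewrite mem_undup mem_cat h.
rewrite (@act_seq Q g s us); last by move=> m h; rewrite mem_undup mem_cat h orbT.
rewrite -big_split /=; apply: eq_bigr => m _.
by rewrite mcoeffD mpolyCD tofracD mulrDl.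
Qed.

Lemma actZX (c : CC) (m : 'X_{1..n + n}) g :
  act (c *: 'X_[m]) g = ((c%:MP : Poly))%:F * MA m g.
Proof.
rewrite (@act_seq _ g [:: m]) //; last first.
  by move=> m' /msuppZ_le; rewrite msuppX.
by rewrite big_seq1 mcoeffZ mcoeffX eqxx mulr1.
Qed.

Lemma act_sum (I : Type) (r : seq I) (Pr : pred I) (F : I -> W) g :
  act (\sum_(i <- r | Pr i) F i) g = \sum_(i <- r | Pr i) act (F i) g.
Proof. exact: (big_morph (fun P => act P g) (fun P Q => actD P Q g) (act0 g)). Qed.

Lemma actE P g : act P g = \sum_(m <- msupp P) act (P@_m *: 'X_[m]) g.
Proof.
transitivity (\sum_(m <- msupp P) ((P@_m)%:MP : Poly)%:F * MA m g) => //.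
by apply: eq_bigr => m _; rewrite actZX.
Qed.

Lemma actZ c P g : act (c *: P) g = ((c%:MP : Poly))%:F * act P g.
Proof.
rewrite {1}(mpolyE P) scaler_sumr act_sum actE mulr_sumr.
apply: eq_bigr => m _; rewrite scalerA !actZX mpolyCM tofracM.
by rewrite mulrA.
Qed.


Lemma xpartD (m1 m2 : 'X_{1..n + n}) : xpart (m1 + m2) = (xpart m1 + xpart m2)%MM.
Proof. by apply/mnmP => j; rewrite /xpart /dpart !(mnmE, mnmDE). Qed.
Lemma dpartD (m1 m2 : 'X_{1..n + n}) : dpart (m1 + m2) = (dpart m1 + dpart m2)%MM.
Proof. by apply/mnmP => j; rewrite /xpart /dpart !(mnmE, mnmDE). Qed.
Lemma xpartB (m1 m2 : 'X_{1..n + n}) : xpart (m1 - m2) = (xpart m1 - xpart m2)%MM.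
Proof. by apply/mnmP => j; rewrite /xpart /dpart !(mnmE, mnmBE). Qed.
Lemma dpartB (m1 m2 : 'X_{1..n + n}) : dpart (m1 - m2) = (dpart m1 - dpart m2)%MM.
Proof. by apply/mnmP => j; rewrite /xpart /dpart !(mnmE, mnmBE). Qed.
Lemma xpartUl (i : 'I_n) : xpart U_(lshift n i) = U_(i)%MM.
Proof. by apply/mnmP => j; rewrite /xpart /dpart !mnmE (inj_eq (@lshift_inj _ _)). Qed.
Lemma dpartUl (i : 'I_n) : dpart U_(lshift n i) = 0%MM.
Proof. by apply/mnmP => j; rewrite /xpart /dpart !mnmE eq_lrshift. Qed.
Lemma xpartUr (i : 'I_n) : xpart U_(rshift n i) = 0%MM.
Proof. by apply/mnmP => j; rewrite /xpart /dpart !mnmE eq_rlshift. Qed.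
Lemma dpartUr (i : 'I_n) : dpart U_(rshift n i) = U_(i)%MM.
Proof. by apply/mnmP => j; rewrite /xpart /dpart !mnmE (inj_eq (@rshift_inj _ _)). Qed.

Lemma mon_actXl (i : 'I_n) a b g : mon_act (U_(i) + a)%MM b g = ('X_i : Poly)%:F * mon_act a b g.
Proof. by rewrite /mon_act mpolyXD tofracM mulrA. Qed.

Lemma act_weyl_x (i : 'I_n) P g : act (weyl_x i P) g = ('X_i : Poly)%:F * act P g.
Proof.
rewrite /weyl_x {1}(mpolyE P) mulr_sumr act_sum actE mulr_sumr.
apply: eq_bigr => m _.
rewrite -scalerAr -mpolyXD !actZX /MA xpartD dpartD xpartUl dpartUl add0m mon_actXl.
by rewrite mulrCA.
Qed.

Definition Dop (b : 'X_{1..n}) g :=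
  foldr (fun i h => iter (b i) (frac_deriv i) h) g (enum 'I_n).

Lemma foldr_eq_in (T : Type) (s : seq 'I_n) (F : 'I_n -> T -> T) (b1 b2 : 'X_{1..n}) x :
  {in s, b1 =1 b2} ->
  foldr (fun i h => iter (b1 i) (F i) h) x s = foldr (fun i h => iter (b2 i) (F i) h) x s.
Proof.
elim: s => [//|j s IH] h /=; rewrite h ?mem_head // IH // => k ks.
by apply: h; rewrite in_cons ks orbT.
Qed.

Lemma iter_comm (i j : 'I_n) k g : iter k (frac_deriv j) (frac_deriv i g) = frac_deriv i (iter k (frac_deriv j) g).
Proof. by elim: k => [//|k IH] /=; rewrite IH; apply: fd_comm. Qed.

Lemma Dop_seq (i : 'I_n) (b : 'X_{1..n}) g (s : seq 'I_n) : uniq s -> i \in s ->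
  foldr (fun j h => iter ((U_(i) + b)%MM j) (frac_deriv j) h) g s
  = frac_deriv i (foldr (fun j h => iter (b j) (frac_deriv j) h) g s).
Proof.
elim: s => [//|j s IH] /= /andP[js us]; rewrite in_cons.
have [ij|ji] := eqVneq i j => /= iS.
  subst j.
  rewrite (@foldr_eq_in _ s _ (U_(i) + b)%MM b); last first.
    move=> k ks; rewrite mnmDE mnm1E; case: eqP => [ik|_]; last by rewrite add0n.
    by move: ks; rewrite -ik => ks; rewrite ks in js.
  by rewrite mnmDE mnm1E eqxx add1n iterS.
rewrite IH // mnmDE mnm1E (negbTE ji) add0n.
exact: iter_comm.
Qed.

Lemma DopU (i : 'I_n) b g : Dop (U_(i) + b)%MM g = frac_deriv i (Dop b g).
Proof. by apply: Dop_seq; [exact: enum_uniq | rewrite mem_enum]. Qed.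

Lemma frac_deriv_sum (i : 'I_n) (I : Type) (r : seq I) (F : I -> RatF) :
  frac_deriv i (\sum_(k <- r) F k) = \sum_(k <- r) frac_deriv i (F k).
Proof. exact: (big_morph (frac_deriv i) (fdD i) (fd0 _ i)). Qed.

Lemma weyl_d_sum (i : 'I_n) (I : Type) (r : seq I) (F : I -> W) :
  weyl_d i (\sum_(k <- r) F k) = \sum_(k <- r) weyl_d i (F k).
Proof. by rewrite /weyl_d mulr_sumr raddf_sum -big_split. Qed.

Lemma act_weyl_d_mon (i : 'I_n) (c : CC) (m : 'X_{1..n + n}) g :
  act (weyl_d i (c *: 'X_[m])) g = frac_deriv i (act (c *: 'X_[m]) g).
Proof.
rewrite /weyl_d -scalerAr -mpolyXD mderivZ mderivX scalerA actD !actZX /MA.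
rewrite xpartD dpartD xpartUr dpartUr add0m xpartB dpartB xpartUl dpartUl subm0.
rewrite /mon_act -/(Dop _ _) -/(Dop _ _) DopU.
rewrite [in RHS]mulrA -[in RHS]tofracM [RHS]frac_deriv_fd fdMp -frac_deriv_fd mderiv_mulC mderivX.
have -> : m (lshift n i) = xpart m i by rewrite /xpart mnmE.
rewrite -mul_mpolyC mpolyCM !tofracM.
ring.
Qed.

Lemma act_weyl_d (i : 'I_n) P g : act (weyl_d i P) g = frac_deriv i (act P g).
Proof.
rewrite {1}(mpolyE P) weyl_d_sum act_sum actE frac_deriv_sum.
by apply: eq_bigr => m _; apply: act_weyl_d_mon.
Qed.

Lemma foldr_iter_ind (T : Type) (Pp : T -> Prop) (F : 'I_n -> T -> T) (k : 'I_n -> nat) x s :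
  (forall i y, Pp y -> Pp (F i y)) -> Pp x ->
  Pp (foldr (fun i y => iter (k i) (F i) y) x s).
Proof.
move=> hF hx; elim: s => [//|j s IH] /=.
by elim: (k j) => [//|t IHt] /=; apply: hF.
Qed.

Lemma act_weyl_mul A P g : act P g = 0 -> act (weyl_mul A P) g = 0.
Proof.
move=> h; rewrite /weyl_mul act_sum big1 // => m _.
rewrite actZ /weyl_mon_mul.
suff -> : act (foldr (fun i Q => iter (xpart m i) (weyl_x i) Q)
    (foldr (fun i Q => iter (dpart m i) (weyl_d i) Q) P (enum 'I_n)) (enum 'I_n)) g = 0.
  by rewrite mulr0.
apply: (@foldr_iter_ind _ (fun Q => act Q g = 0)).
  by move=> i y hy; rewrite act_weyl_x hy mulr0.
apply: (@foldr_iter_ind _ (fun Q => act Q g = 0)) => // i y hy.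
by rewrite act_weyl_d hy; apply: fd0.
Qed.

End B.

End W2.
Import W2.
Module W3.

Section E.
Variable (n : nat) (w : 'rV[RR]_n).
Local Notation Poly := {mpoly CC[n]}.
Implicit Types (p q : Poly).

Definition wt (a : 'X_{1..n}) : RR := \sum_(i < n) (a i)%:R * w 0 i.

Lemma wtD a b : wt (a + b)%MM = wt a + wt b.
Proof. by rewrite /wt -big_split; apply: eq_bigr => i _; rewrite mnmDE natrD mulrDl. Qed.

Lemma wt0 : wt 0%MM = 0.
Proof. by rewrite /wt big1 // => i _; rewrite mnm0E mul0r. Qed.

Lemma wtU (i : 'I_n) : wt U_(i)%MM = w 0 i.
Proof.
rewrite /wt (bigD1 i) //= mnm1E eqxx mul1r big1 ?addr0 // => j ji.
by rewrite mnm1E eq_sym (negbTE ji) mul0r.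
Qed.

Lemma wt_enum (b : 'X_{1..n}) : \sum_(i <- enum 'I_n) (b i)%:R * w 0 i = wt b.
Proof. by rewrite big_enum /=; apply: eq_bigl => i; rewrite inE. Qed.

Definition supp_in (Pm : 'X_{1..n} -> Prop) p := forall m, p@_m != 0 -> Pm m.

Lemma supp_in0 Pm : supp_in Pm 0.
Proof. by move=> m; rewrite mcoeff0 eqxx. Qed.

Lemma supp_inD Pm p q : supp_in Pm p -> supp_in Pm q -> supp_in Pm (p + q).
Proof.
move=> hp hq m; rewrite mcoeffD.
have [/hp//|/negbNE/eqP p0] := boolP (p@_m != 0).
by rewrite p0 add0r => /hq.
Qed.

Lemma supp_inN Pm p : supp_in Pm p -> supp_in Pm (- p).
Proof. by move=> hp m; rewrite mcoeffN oppr_eq0 => /hp. Qed.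

Lemma supp_inB Pm p q : supp_in Pm p -> supp_in Pm q -> supp_in Pm (p - q).
Proof. by move=> hp hq; apply: supp_inD => //; apply: supp_inN. Qed.

Lemma supp_inZ Pm (c : CC) p : supp_in Pm p -> supp_in Pm (c *: p).
Proof.
move=> hp m; rewrite mcoeffZ; have [/hp//|/negbNE/eqP ->] := boolP (p@_m != 0).
by rewrite mulr0 eqxx.
Qed.

Lemma supp_inMn Pm p k : supp_in Pm p -> supp_in Pm (p *+ k).
Proof.
move=> hp m; rewrite mcoeffMn; have [/hp//|/negbNE/eqP ->] := boolP (p@_m != 0).
by rewrite mul0rn eqxx.
Qed.

Lemma supp_inW (Pm Qm : 'X_{1..n} -> Prop) p :
  (forall m, Pm m -> Qm m) -> supp_in Pm p -> supp_in Qm p.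
Proof. by move=> h hp m /hp /h. Qed.

Lemma supp_in_sum (I : Type) (r : seq I) (Pr : pred I) (F : I -> Poly) Pm :
  (forall i, Pr i -> supp_in Pm (F i)) -> supp_in Pm (\sum_(i <- r | Pr i) F i).
Proof.
move=> h; elim/big_rec: _ => [|i x Pi hx]; first exact: supp_in0.
by apply: supp_inD => //; apply: h.
Qed.

Lemma supp_in_sum_seq (I : eqType) (r : seq I) (Pr : pred I) (F : I -> Poly) Pm :
  (forall i, i \in r -> Pr i -> supp_in Pm (F i)) -> supp_in Pm (\sum_(i <- r | Pr i) F i).
Proof.
move=> h; rewrite big_seq_cond; apply: supp_in_sum => i /andP[ir Pi].
exact: h.
Qed.

Lemma supp_inX (Pm : 'X_{1..n} -> Prop) m : Pm m -> supp_in Pm 'X_[m].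
Proof. by move=> h m'; rewrite mcoeffX; have [<-//|_] := eqVneq m m'; rewrite eqxx. Qed.

Lemma supp_inM (P1 P2 P3 : 'X_{1..n} -> Prop) p q :
  supp_in P1 p -> supp_in P2 q -> (forall a b, P1 a -> P2 b -> P3 (a + b)%MM) ->
  supp_in P3 (p * q).
Proof.
move=> hp hq h m; rewrite -mcoeff_msupp => /msuppM_le /allpairsP [[a b] /= [ha hb ->]].
by apply: h; [apply: hp | apply: hq]; rewrite -mcoeff_msupp.
Qed.

Lemma supp_in_deriv (Pm : 'X_{1..n} -> Prop) (i : 'I_n) p :
  supp_in Pm p -> supp_in (fun m => Pm (m + U_(i))%MM) (p^`M(i)).
Proof.
move=> hp m; rewrite mcoeff_mderiv.
have [/hp//|/negbNE/eqP ->] := boolP (p@_(m + U_(i)) != 0).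
by rewrite mul0rn eqxx.
Qed.

Definition hom (s : RR) := supp_in (fun m => wt m = s).
Definition gtw (s : RR) := supp_in (fun m => s < wt m).

Lemma homM s t p q : hom s p -> hom t q -> hom (s + t) (p * q).
Proof. by move=> hp hq; apply: supp_inM hp hq _ => a b ha hb; rewrite wtD ha hb. Qed.
Lemma gthomM s t p q : gtw s p -> hom t q -> gtw (s + t) (p * q).
Proof. by move=> hp hq; apply: supp_inM hp hq _ => a b ha hb; rewrite wtD hb ltrD2r. Qed.
Lemma homgtM s t p q : hom s p -> gtw t q -> gtw (s + t) (p * q).
Proof. by move=> hp hq; apply: supp_inM hp hq _ => a b ha hb; rewrite wtD ha ltrD2l. Qed.
Lemma gtgtM s t p q : gtw s p -> gtw t q -> gtw (s + t) (p * q).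
Proof. by move=> hp hq; apply: supp_inM hp hq _ => a b ha hb; rewrite wtD ltrD. Qed.

Lemma hom_deriv s (i : 'I_n) p : hom s p -> hom (s - w 0 i) (p^`M(i)).
Proof.
move=> hp; move: (supp_in_deriv (i:=i) hp); apply: supp_inW => m; rewrite wtD wtU => <-.
by rewrite addrK.
Qed.
Lemma gt_deriv s (i : 'I_n) p : gtw s p -> gtw (s - w 0 i) (p^`M(i)).
Proof.
move=> hp; move: (supp_in_deriv (i:=i) hp); apply: supp_inW => m; rewrite wtD wtU => h.
by rewrite ltrBlDr.
Qed.

Lemma homE s t p : s = t -> hom s p -> hom t p. Proof. by move=> ->. Qed.
Lemma gtE s t p : s = t -> gtw s p -> gtw t p. Proof. by move=> ->. Qed.
Lemma gtW s t p : s <= t -> gtw t p -> gtw s p.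
Proof. by move=> st; apply: supp_inW => m; apply: le_lt_trans. Qed.
Lemma hom_gt s t p : s < t -> hom t p -> gtw s p.
Proof. by move=> st; apply: supp_inW => m ->. Qed.

Lemma hom_gt_eq0 s p q : hom s p -> gtw s q -> p + q = 0 -> p = 0.
Proof.
move=> hp hq e; apply/mpolyP => m; rewrite mcoeff0.
apply/eqP; apply/negP => /negP pm.
have ws := hp m pm.
have qm : q@_m = 0.
  apply/eqP; apply/negP => /negP /hq; rewrite ws ltxx //.
by move/eqP: pm; apply; have := congr1 (mcoeff m) e; rewrite mcoeffD qm addr0 mcoeff0.
Qed.

End E.

End W3.
Import W3.
Module W4.

Lemma argmin_seq (T : eqType) (F : T -> RR) (s : seq T) : s != [::] ->
  exists2 x, x \in s & forall y, y \in s -> F x <= F y.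
Proof.
elim: s => [//|a s IH] _.
have [->|sn] := eqVneq s [::].
  by exists a; rewrite ?mem_head // => y; rewrite inE => /eqP ->.
have [x xs hx] := IH sn.
have [ax|xa] := lerP (F a) (F x).
  exists a; first exact: mem_head.
  by move=> y; rewrite inE => /orP[/eqP ->//|/hx]; apply: le_trans.
exists x; first by rewrite inE xs orbT.
by move=> y; rewrite inE => /orP[/eqP ->|/hx//]; apply: ltW.
Qed.

Section F.
Variable (n : nat) (w : 'rV[RR]_n).
Local Notation Poly := {mpoly CC[n]}.
Local Notation wt := (wt w).

Lemma pairing_expv m : pairing (expv m) w = wt m.
Proof. by []. Qed.

Lemma polytope_ge (f : Poly) d0 v : (forall m, m \in msupp f -> d0 <= wt m) ->
  newton_polytope f v -> d0 <= pairing v w.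
Proof.
move=> hd [lam [lam0 lam1 hv]].
have -> : pairing v w = \sum_(m <- msupp f) lam m * wt m.
  rewrite /pairing (eq_bigr (fun i => \sum_(m <- msupp f) lam m * ((m i)%:R * w 0 i))); last first.
    by move=> i _; rewrite hv mulr_suml; apply: eq_bigr => m _; rewrite mulrA.
  by rewrite exchange_big /=; apply: eq_bigr => m _; rewrite /W3.wt mulr_sumr.
rewrite -[d0]mulr1 -lam1 mulr_sumr big_seq [X in _ <= X]big_seq.
by apply: ler_sum => m mf; rewrite mulrC; apply: ler_wpM2l => //; apply: hd.
Qed.

Lemma polytope_pt (f : Poly) m : m \in msupp f -> newton_polytope f (expv m).
Proof.
move=> mf; exists (fun m' => (m' == m)%:R); split.
- by move=> m'; rewrite ler0n.
- rewrite (bigD1_seq m) //= ?msupp_uniq // eqxx big1 ?addr0 // => m' /negbTE ->.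
  by [].
- move=> i; rewrite (bigD1_seq m) //= ?msupp_uniq // eqxx mul1r big1 ?addr0 //.
  by move=> m' /negbTE ->; rewrite mul0r.
Qed.

Lemma face_iff (f : Poly) m0 m : m0 \in msupp f ->
  (forall m, m \in msupp f -> wt m0 <= wt m) -> m \in msupp f ->
  (face f w (expv m) <-> wt m = wt m0).
Proof.
move=> m0f hmin mf; split.
  case=> _ h; have := h _ (polytope_pt m0f); rewrite !pairing_expv => h1.
  by apply/eqP; rewrite eq_le h1 hmin.
move=> e; split; first exact: polytope_pt.
by move=> v hv; rewrite pairing_expv e; apply: polytope_ge hv.
Qed.

Lemma ftau_coef (f : Poly) m0 m : m0 \in msupp f ->
  (forall m, m \in msupp f -> wt m0 <= wt m) ->
  (face_poly f w)@_m = if (m \in msupp f) && (wt m == wt m0) then f@_m else 0.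
Proof.
move=> m0f hmin; rewrite /face_poly (big_morph (mcoeff m) (mcoeffD m) (mcoeff0 _ m)).
rewrite (eq_big_seq (fun m' => if wt m' == wt m0 then f@_m' * (m' == m)%:R else 0)); last first.
  move=> m' m'f; case: ClassicalEpsilon.excluded_middle_informative => h.
    by rewrite /= ((face_iff m0f hmin m'f).1 h) eqxx mcoeffZ mcoeffX.
  rewrite /=; case: eqP => [e|_]; last by rewrite mcoeff0.
  by case: h; apply/(face_iff m0f hmin m'f).
have [mf|mf] := boolP (m \in msupp f); last first.
  rewrite big1_seq // => m' /= m'f; case: ifP => // _.
  by case: eqP => [e|_]; [move: m'f; rewrite e (negbTE mf) | rewrite mulr0].
rewrite (bigD1_seq m) //= ?msupp_uniq // eqxx mulr1 big1 ?addr0 //.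
by move=> m' /negbTE ->; rewrite mulr0; case: ifP.
Qed.

End F.

End W4.
Import W4.
Module W5.

Lemma ring_id2 (R : comRingType) (F Fi D Fk : R) (K : nat) :
  F * D = Fk * Fi * K%:R -> F * (Fi * Fk + F * D) = F * Fk * Fi * (K.+1)%:R.
Proof.
move=> h; have -> : F * (Fi * Fk + F * D) = F * (Fi * Fk) + F * (F * D) by ring.
by rewrite h -addn1 natrD; ring.
Qed.

Lemma ring_id3 (R : comRingType) (N Ni F D Fk Fi : R) (K : nat) :
  F * D = Fk * Fi * K%:R ->
  (Ni * Fk - N * D) * (Fk * F) = (Ni * F - N * Fi * K%:R) * Fk ^+ 2.
Proof.
move=> h; have -> : (Ni * Fk - N * D) * (Fk * F) = Ni * Fk * Fk * F - N * Fk * (F * D) by ring.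
by rewrite h; ring.
Qed.

Lemma ring_id4 (R : comRingType) (a b c d ai bi ci di K : R) :
  (ai * c - a * ci * K) - (bi * d - b * di * K) =
  bi * (c - d) + (ai - bi) * d + (ai - bi) * (c - d)
  - (b * (ci - di) + (a - b) * di + (a - b) * (ci - di)) * K.
Proof. ring. Qed.

Section G.
Variable (n : nat) (w : 'rV[RR]_n).
Local Notation Poly := {mpoly CC[n]}.
Local Notation wt := (W3.wt w).
Local Notation hom := (W3.hom w).
Local Notation gtw := (W3.gtw w).

Lemma ftau_facts (f : Poly) : f != 0 ->
  exists d0, [/\ hom d0 (face_poly f w), gtw d0 (f - face_poly f w) & face_poly f w != 0].
Proof.
move=> f0; have [m0 m0f hmin] : exists2 m0, m0 \in msupp f & forall m, m \in msupp f -> wt m0 <= wt m.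
  by apply: argmin_seq; rewrite msupp_eq0.
exists (wt m0); split.
- move=> m; rewrite (ftau_coef m m0f hmin); case: ifP => [/andP[_ /eqP]//|_].
  by rewrite eqxx.
- move=> m; rewrite mcoeffB (ftau_coef m m0f hmin).
  case: ifP => [_|hc]; first by rewrite subrr eqxx.
  have [mf|mf] := boolP (m \in msupp f).
    move: hc; rewrite mf /= => /negbT hne _.
    by rewrite lt_neqAle eq_sym hne hmin.
  have -> : f@_m = 0 by apply/eqP; rewrite mcoeff_eq0.
  by rewrite subr0 eqxx.
- apply/negP => /eqP h; have := ftau_coef m0 m0f hmin.
  rewrite h mcoeff0 m0f eqxx /= => /esym/eqP; rewrite mcoeff_eq0 m0f.
  by [].
Qed.

Lemma gtD s (p q : Poly) : gtw s p -> gtw s q -> gtw s (p + q).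
Proof. exact: supp_inD. Qed.
Lemma gtB s (p q : Poly) : gtw s p -> gtw s q -> gtw s (p - q).
Proof. exact: supp_inB. Qed.
Lemma gtMn s (p : Poly) k : gtw s p -> gtw s (p * k%:R).
Proof. by rewrite mulr_natr; exact: supp_inMn. Qed.
Lemma homB s (p q : Poly) : hom s p -> hom s q -> hom s (p - q).
Proof. exact: supp_inB. Qed.
Lemma homMn s (p : Poly) k : hom s p -> hom s (p * k%:R).
Proof. by rewrite mulr_natr; exact: supp_inMn. Qed.

Lemma gtE2 s t (p : Poly) : gtw s p -> s = t -> gtw t p.
Proof. by move=> h <-. Qed.
Lemma homE2 s t (p : Poly) : hom s p -> s = t -> hom t p.
Proof. by move=> h <-. Qed.

Definition step (F : Poly) (i : 'I_n) (x : Poly * nat) : Poly * nat :=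
  (x.1^`M(i) * F - x.1 * F^`M(i) * (x.2)%:R, x.2.+1).

Lemma mderivXn (F : Poly) (i : 'I_n) k : F * (F ^+ k)^`M(i) = F ^+ k * F^`M(i) * k%:R.
Proof.
elim: k => [|k IH]; first by rewrite expr0 mderiv1 !mulr0.
by rewrite exprS mderivM; apply: ring_id2.
Qed.

Lemma fd_step (F : Poly) (i : 'I_n) N k : F != 0 ->
  frac_deriv i (N%:F / (F ^+ k)%:F) = (step F i (N, k)).1%:F / (F ^+ (step F i (N, k)).2)%:F.
Proof.
move=> F0; have Fk := expf_neq0 k F0.
rewrite frac_deriv_fd (fdE _ _ Fk) /=.
apply: frac_eq; [exact: expf_neq0 | exact: expf_neq0 |].
rewrite exprSr; exact: ring_id3 (mderivXn F i k).
Qed.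

Lemma iter_fd_step (F : Poly) (i : 'I_n) j x : F != 0 ->
  iter j (frac_deriv i) (x.1%:F / (F ^+ x.2)%:F) =
  (iter j (step F i) x).1%:F / (F ^+ (iter j (step F i) x).2)%:F.
Proof.
move=> F0; elim: j => [//|j IH]; rewrite !iterS IH.
by case: (iter j (step F i) x) => N k; apply: fd_step.
Qed.

Lemma foldr_fd_step (F : Poly) (b : 'X_{1..n}) x (s : seq 'I_n) : F != 0 ->
  foldr (fun i h => iter (b i) (frac_deriv i) h) (x.1%:F / (F ^+ x.2)%:F) s =
  (foldr (fun i y => iter (b i) (step F i) y) x s).1%:F /
  (F ^+ (foldr (fun i y => iter (b i) (step F i) y) x s).2)%:F.
Proof. by move=> F0; elim: s => [//|j s IH] /=; rewrite IH iter_fd_step. Qed.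

Lemma foldr_step2 (F : Poly) (b : 'X_{1..n}) x (s : seq 'I_n) :
  (foldr (fun i y => iter (b i) (step F i) y) x s).2 = (x.2 + \sum_(i <- s) b i)%N.
Proof.
elim: s => [|j s IH] /=; first by rewrite big_nil addn0.
have H : forall k y, (iter k (step F j) y).2 = (y.2 + k)%N.
  by move=> k y; elim: k => [|k IHk] /=; rewrite ?addn0 // IHk addnS.
by rewrite H IH big_cons [(b j + _)%N]addnC addnA.
Qed.

Section Track.
Variables (f ft : Poly) (d0 : RR).
Hypotheses (Hh : hom d0 ft) (Hg : gtw d0 (f - ft)).

Definition Inv s (x y : Poly * nat) := [/\ x.2 = y.2, hom s y.1 & gtw s (x.1 - y.1)].

Lemma InvE s t x y : Inv s x y -> s = t -> Inv t x y. Proof. by move=> h <-. Qed.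

Lemma step_inv s (i : 'I_n) x y : Inv s x y -> Inv (s + (d0 - w 0 i)) (step f i x) (step ft i y).
Proof.
case: x => N k; case: y => N' k' [/= <- hN hR]; split => /=.
- by [].
- apply: homB.
    by apply: (homE2 (homM (hom_deriv (i:=i) hN) Hh)); ring.
  apply: homMn.
  by apply: (homE2 (homM hN (hom_deriv (i:=i) Hh))); ring.
rewrite ring_id4 -!mderivB.
apply: gtB.
  apply: gtD; first apply: gtD.
  - by apply: (gtE2 (homgtM (hom_deriv (i:=i) hN) Hg)); ring.
  - by apply: (gtE2 (gthomM (gt_deriv (i:=i) hR) Hh)); ring.
  - by apply: (gtE2 (gtgtM (gt_deriv (i:=i) hR) Hg)); ring.
apply: gtMn.
apply: gtD; first apply: gtD.
- by apply: (gtE2 (homgtM hN (gt_deriv (i:=i) Hg))); ring.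
- by apply: (gtE2 (gthomM hR (hom_deriv (i:=i) Hh))); ring.
- by apply: (gtE2 (gtgtM hR (gt_deriv (i:=i) Hg))); ring.
Qed.

Lemma iter_inv s (j : 'I_n) k x y : Inv s x y ->
  Inv (s + k%:R * (d0 - w 0 j)) (iter k (step f j) x) (iter k (step ft j) y).
Proof.
move=> h; elim: k => [|k IHk]; first by apply: (InvE h); rewrite mul0r addr0.
have H := step_inv j IHk.
refine (InvE H _).
have -> : (k.+1)%:R = k%:R + 1 :> RR by rewrite -addn1 natrD.
ring.
Qed.

Lemma foldr_inv s (b : 'X_{1..n}) x y (r : seq 'I_n) : Inv s x y ->
  Inv (s + \sum_(i <- r) (b i)%:R * (d0 - w 0 i))
    (foldr (fun i z => iter (b i) (step f i) z) x r)
    (foldr (fun i z => iter (b i) (step ft i) z) y r).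
Proof.
elim: r => [|j r IH] h /=; first by apply: (InvE h); rewrite big_nil addr0.
have H := iter_inv j (b j) (IH h).
refine (InvE H _).
by rewrite big_cons; ring.
Qed.

End Track.
End G.

End W5.
Import W5.
Module W6.

Lemma field_id1 (F : fieldType) (c X N D E : F) : D != 0 ->
  c * (X * (N / D)) * (D * E) = c * X * N * E.
Proof.
move=> D0; have -> : c * (X * (N / D)) * (D * E) = c * X * N * (D^-1 * D) * E by ring.
by rewrite mulVf // mulr1.
Qed.

Lemma ring_id5 (R : comRingType) (c N N' F G : R) :
  c * N * F - c * N' * G = c * (N' * (F - G) + (N - N') * G + (N - N') * (F - G)).
Proof. ring. Qed.

Lemma ring_id6 (R : comRingType) (f g fj gj : R) :
  f * fj - g * gj = (f - g) * gj + g * (fj - gj) + (f - g) * (fj - gj).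
Proof. ring. Qed.

Lemma real_id (x wb S K L B d0 : RR) : S = B * d0 - wb ->
  x + (0 + S) + (K - (L + B)) * d0 = (K - L) * d0 - (wb - x).
Proof. by move->; ring. Qed.

Section H.
Variable (n : nat) (w : 'rV[RR]_n).
Local Notation Poly := {mpoly CC[n]}.
Local Notation wt := (W3.wt w).
Local Notation hom := (W3.hom w).
Local Notation gtw := (W3.gtw w).

Lemma weightE (m : 'X_{1..n + n}) : weight w m = wt (dpart m) - wt (xpart m).
Proof. by rewrite /weight /W3.wt -sumrB; apply: eq_bigr => i _; rewrite mulNr addrC. Qed.

Lemma pow_facts (f ft : Poly) d0 : hom d0 ft -> gtw d0 (f - ft) -> forall j,
  hom (j%:R * d0) (ft ^+ j) /\ gtw (j%:R * d0) (f ^+ j - ft ^+ j).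
Proof.
move=> Hh Hg; elim=> [|j [IH1 IH2]].
  split; last by rewrite !expr0 subrr; apply: supp_in0.
  rewrite expr0 mul0r -mpolyX0; apply: supp_inX; exact: wt0.
have e : d0 + j%:R * d0 = (j.+1)%:R * d0 by rewrite -addn1 natrD; ring.
split; first by rewrite exprS; apply: (homE2 (homM Hh IH1)).
rewrite !exprS ring_id6; apply: gtD; first apply: gtD.
- by apply: (gtE2 (gthomM Hg IH1)).
- by apply: (gtE2 (homgtM Hh IH2)).
- by apply: (gtE2 (gtgtM Hg IH2)).
Qed.

Lemma inv_powE (F : Poly) l : inv_pow F l = ((1 : Poly), l).1%:F / (F ^+ ((1 : Poly), l).2)%:F.
Proof. by rewrite /inv_pow tofrac1 div1r. Qed.

Section Main.
Variables (f : Poly) (l : nat) (P : Weyl n).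
Hypotheses (f0 : f != 0) (hP : act P (inv_pow f l) = 0) (P0 : P != 0).

Let ft := face_poly f w.

Definition Xf (F : Poly) (m : 'X_{1..n + n}) :=
  foldr (fun i y => iter (dpart m i) (step F i) y) ((1 : Poly), l) (enum 'I_n).
Definition km (m : 'X_{1..n + n}) := (l + \sum_(i <- enum 'I_n) dpart m i)%N.
Definition KK := (\sum_(m <- msupp P) km m)%N.
Definition TT (F : Poly) (m : 'X_{1..n + n}) : Poly :=
  ((P@_m)%:MP : Poly) * 'X_[xpart m] * (Xf F m).1 * F ^+ (KK - km m).

Lemma Xf2 F m : (Xf F m).2 = km m.
Proof. by rewrite /Xf foldr_step2. Qed.

Lemma km_le m : m \in msupp P -> (km m <= KK)%N.
Proof. by move=> mP; rewrite /KK (bigD1_seq m) ?msupp_uniq //= leq_addr. Qed.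

Lemma term_eq (F : Poly) m : F != 0 -> m \in msupp P ->
  ((P@_m)%:MP : Poly)%:F * MA m (inv_pow F l) * (F ^+ KK)%:F = (TT F m)%:F.
Proof.
move=> F0 mP; rewrite /MA /mon_act inv_powE foldr_fd_step // -/(Xf F m) Xf2.
rewrite -(subnKC (km_le mP)) exprD tofracM field_id1; last by rewrite tofrac_eq0 expf_neq0.
by rewrite /TT !tofracM.
Qed.

Lemma act_mul (F : Poly) (Pr : pred 'X_{1..n + n}) : F != 0 ->
  (\sum_(m <- msupp P | Pr m) ((P@_m)%:MP : Poly)%:F * MA m (inv_pow F l)) * (F ^+ KK)%:F
  = (\sum_(m <- msupp P | Pr m) TT F m)%:F.
Proof.
move=> F0; rewrite mulr_suml rmorph_sum /= big_seq_cond [RHS]big_seq_cond.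
by apply: eq_bigr => m /andP[mP _]; apply: term_eq.
Qed.

Definition ismax (m : 'X_{1..n + n}) := all (fun m' => weight w m' <= weight w m) (msupp P).

Lemma key_in_form : act (in_form w P) (inv_pow ft l) = 0.
Proof.
have [d0 [Hh Hg ft0]] := ftau_facts w f0.
have [ms msP hms] : exists2 ms, ms \in msupp P & forall m, m \in msupp P -> - weight w ms <= - weight w m.
  by apply: argmin_seq; rewrite msupp_eq0.
set M := weight w ms.
have Mmax : forall m, m \in msupp P -> weight w m <= M.
  by move=> m /hms; rewrite lerN2.
have wmax : forall m, m \in msupp P -> ismax m -> weight w m = M.
  move=> m mP /allP h; apply/eqP; rewrite eq_le Mmax //=; exact: h.
have wnmax : forall m, m \in msupp P -> ~~ ismax m -> weight w m < M.
  move=> m mP /allPn [m' m'P]; rewrite -ltNge => h.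
  exact: lt_le_trans h (Mmax _ m'P).
set Tw := fun m : 'X_{1..n + n} => (KK%:R - l%:R) * d0 - weight w m.
have tf : forall m, m \in msupp P -> hom (Tw m) (TT ft m) /\ gtw (Tw m) (TT f m - TT ft m).
  move=> m mP.
  have I0 : Inv w 0 ((1 : Poly), l) ((1 : Poly), l).
    split => //; last by rewrite subrr; apply: supp_in0.
    rewrite /= -mpolyX0; apply: supp_inX; exact: wt0.
  have [e2 hN hR] : Inv w (0 + \sum_(i <- enum 'I_n) ((dpart m) i)%:R * (d0 - w 0 i)) (Xf f m) (Xf ft m)
    := foldr_inv Hh Hg (dpart m) (enum 'I_n) I0.
  have [hp gp] := pow_facts Hh Hg (KK - km m).
  have hc : hom (wt (xpart m)) (((P@_m)%:MP : Poly) * 'X_[xpart m]).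
    by rewrite mul_mpolyC; apply: supp_inZ; apply: supp_inX.
  have eT : wt (xpart m) + (0 + \sum_(i <- enum 'I_n) ((dpart m) i)%:R * (d0 - w 0 i))
            + (KK - km m)%:R * d0 = Tw m.
    have e1 : ((KK - km m)%N)%:R = KK%:R - (l%:R + \sum_(i <- enum 'I_n) ((dpart m) i)%:R) :> RR.
      rewrite (natrB _ (km_le mP)).
      rewrite /km.
      rewrite natrD.
      by rewrite natr_sum.
    have eS : \sum_(i <- enum 'I_n) ((dpart m) i)%:R * (d0 - w 0 i) =
       (\sum_(i <- enum 'I_n) ((dpart m) i)%:R) * d0 - wt (dpart m).
      by rewrite -(wt_enum w (dpart m)) mulr_suml -sumrB; apply: eq_bigr => i _; rewrite mulrBr.
    rewrite /Tw weightE e1; exact: real_id eS.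
  split.
    by apply: (homE2 (homM (homM hc hN) hp)).
  rewrite /TT ring_id5.
  have hG : gtw ((0 + \sum_(i <- enum 'I_n) ((dpart m) i)%:R * (d0 - w 0 i))
        + (KK - km m)%:R * d0)
      ((Xf ft m).1 * (f ^+ (KK - km m) - ft ^+ (KK - km m)) +
       ((Xf f m).1 - (Xf ft m).1) * ft ^+ (KK - km m) +
       ((Xf f m).1 - (Xf ft m).1) * (f ^+ (KK - km m) - ft ^+ (KK - km m))).
    apply: gtD; first apply: gtD.
    - exact: homgtM hN gp.
    - exact: gthomM hR hp.
    - exact: gtgtM hR gp.
  apply: (gtE2 (homgtM hc hG)); by rewrite addrA; exact: eT.
set C := (KK%:R - l%:R) * d0 - M.
have hsum := act_mul (fun _ => true) f0.
rewrite -/(act P (inv_pow f l)) hP mul0r in hsum.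
have Q0 : \sum_(m <- msupp P) TT f m = 0.
  by apply/eqP; rewrite -tofrac_eq0 -hsum.
have E : \sum_(m <- msupp P) TT f m = (\sum_(m <- msupp P | ismax m) TT ft m +
   \sum_(m <- msupp P | ismax m) (TT f m - TT ft m)) + \sum_(m <- msupp P | ~~ ismax m) TT f m.
  rewrite [LHS](bigID ismax); congr (_ + _); rewrite -big_split.
  by apply: eq_bigr => m _; exact: (esym (etrans (addrC _ _) (subrK _ _))).
have E' : \sum_(m <- msupp P | ismax m) TT ft m +
   (\sum_(m <- msupp P | ismax m) (TT f m - TT ft m) + \sum_(m <- msupp P | ~~ ismax m) TT f m) = 0.
  by rewrite addrA -E Q0.
have Qt : \sum_(m <- msupp P | ismax m) TT ft m = 0.
  apply: (@hom_gt_eq0 _ w C _ _ _ _ E').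
    apply: supp_in_sum_seq => m mP hm; have [h _] := tf m mP.
    by apply: (homE2 h); rewrite /Tw /C wmax.
  apply: gtD.
    apply: supp_in_sum_seq => m mP hm; have [_ h] := tf m mP.
    by apply: (gtE2 h); rewrite /Tw /C wmax.
  apply: supp_in_sum_seq => m mP hm; have [h1 h2] := tf m mP.
  have lt : C < Tw m by rewrite /Tw /C ltrD2l ltrN2; apply: wnmax.
  rewrite -(subrK (TT ft m) (TT f m)); apply: gtD.
    exact: gtW (ltW lt) h2.
  exact: hom_gt lt h1.
have hsum2 := act_mul ismax ft0.
rewrite Qt tofrac0 in hsum2.
have -> : act (in_form w P) (inv_pow ft l) =
    \sum_(m <- msupp P | ismax m) ((P@_m)%:MP : Poly)%:F * MA m (inv_pow ft l).
  by rewrite /in_form act_sum; apply: eq_bigr => m _; rewrite actZX.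
move/eqP: hsum2; rewrite mulf_eq0 tofrac_eq0 expf_eq0 (negbTE ft0) andbF orbF.
by move/eqP.
Qed.

End Main.
End H.


End W6.
Import W6.
Unset Implicit Arguments.
Unset Strict Implicit.
Theorem mainTheorem6 (n : nat) (f : {mpoly CC[n]}) (l : nat) (w : 'rV[RR]_n) :
  f != 0 -> w != 0 ->
  forall P : Weyl n,
    in_ideal w (Ann (inv_pow f l)) P ->
    Ann (inv_pow (face_poly f w) l) P.
Proof.
move=> f0 _ P; rewrite /in_ideal => h; elim: h => {P}.
- by move=> Q [P [hP P0 ->]]; apply: key_in_form.
- exact: act0.
- by move=> P Q _ hP _ hQ; rewrite /Ann actD hP hQ addr0.
- by move=> A P _ hP; apply: act_weyl_mul.
Qed.
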